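(* Let $\mathcal P$ be an energy timed path, $E$ a closed interval with rational bounds, and $\mathcal R=\mathcal R^E_{\mathcal P}$ the associated energy function. For every decreasing sequence $(I_j)_{j\in\mathbb N}$ of intervals in $\mathcal I(E)$ (i.e. $I_j\supseteq I_{j+1}$ for all $j$), $$\mathcal R^{-1}\Big(\bigcap_{j\in\mathbb N} I_j\Big)=\bigcap_{j\in\mathbb N}\mathcal R^{-1}(I_j)\qquad\text{and}\qquad \mathcal R\Big(\bigcap_{j\in\mathbb N} I_j\Big)=\bigcap_{j\in\mathbb N}\mathcal R(I_j).$$
   Context: An energy timed automaton (ETA) is a tuple $\langle S,S_0,X,\mathrm{Inv},r,T\rangle$ where $S$ is a finite set of states, $S_0\subseteq S$ the initial states, $X$ a finite set of clocks, $\mathrm{Inv}$ assigns to each state an invariant which is a conjunction of closed (non-strict) clock constraints $x\bowtie c$ with $\bowtie\in\{\le,\ge,=\}$ and $c$ rational, $r\colon S\to\mathbb Q$ assigns an energy rate to each state, and $T$ is a finite set of transitions $(s,g,u,z,s')$ with $g$ a closed clock constraint (guard), $u\in\mathbb Q$ an energy update, and $z\subseteq X$ a set of clocks to reset. Given transitions $t_i=(s_i,g_i,u_i,z_i,s_{i+1})$, $0\le i<n$, a finite run is a sequence of configurations $(\ell_j,v_j,w_j)_{0\le j\le 2n}$ (state, clock valuation, energy level) for which there exist delays $d_i\ge 0$ with: $\ell_{2j}=\ell_{2j+1}=s_j$, $\ell_{2n}=s_n$; $v_{2j+1}=v_{2j}+d_j$ and $v_{2j+2}=v_{2j+1}[z_j\to0]$;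 $v_{2j}\models\mathrm{Inv}(s_j)$ and $v_{2j+1}\models \mathrm{Inv}(s_j)\wedge g_j$; $w_{2j+1}=w_{2j}+d_j\,r(s_j)$ and $w_{2j+2}=w_{2j+1}+u_j$. An energy constraint is a closed interval $E$ with rational bounds; a run satisfies $E$ if all its energy levels $w_j$ lie in $E$. $\mathcal I(E)$ denotes the set of closed subintervals of $E$ (including $\emptyset$). An energy timed path (ETP) from $s_0$ to $s_n$ is an ETA with states $s_0,\dots,s_n$, initial state $s_0$, and exactly one transition from $s_i$ to $s_{i+1}$ for each $0\le i<n$ (and no other transitions). The binary energy relation $\mathcal R^E_{\mathcal P}\subseteq E\times E$ of an ETP $\mathcal P$ holds for $(w_0,w_1)$ iff there is a finite run of $\mathcal P$ from $(s_0,\mathbf 0,w_0)$ to $(s_n,\mathbf 0,w_1)$ satisfying $E$ ($\mathbf 0$ the all-zero valuation). The associated energy function maps $I\in\mathcal I(E)$ to $\mathcal R(I)=\{w_1\in E\mid\exists w_0\in I.\ \mathcal R(w_0,w_1)\}$, and $\mathcal R^{-1}(I)=\{w_0\in E\mid \exists w_1\in I.\ \mathcal R(w_0,w_1)\}$. *)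

(* Defs.v *)
From Stdlib Require Import Reals QArith Qreals List.
Open Scope R_scope.

(** Clocks are the natural numbers [x < nclk] of an ETP; valuations map
    clocks to nonnegative reals (only clocks [< nclk] are meaningful). *)
Definition valuation := nat -> R.

Definition zero_val : valuation := fun _ => 0.

Definition delay (v : valuation) (d : R) : valuation := fun x => v x + d.

Definition reset (z : list nat) (v : valuation) : valuation :=
  fun x => if existsb (Nat.eqb x) z then 0 else v x.

Inductive cmp := CLe | CGe | CEq.

Record atom := mkAtom { a_clock : nat; a_cmp : cmp; a_const : Q }.

Definition constraint := list atom.

Definition sat_atom (v : valuation) (a : atom) : Prop :=
  match a_cmp a with
  | CLe => v (a_clock a) <= Q2R (a_const a)
  | CGe => v (a_clock a) >= Q2R (a_const a)
  | CEq => v (a_clock a) = Q2R (a_const a)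
  end.

Definition sat (v : valuation) (g : constraint) : Prop :=
  forall a, In a g -> sat_atom v a.

(** An energy timed path with states s_0,...,s_n (represented by indices
    0..n), initial state s_0, and exactly one transition
    t_i = (s_i, g_i, u_i, z_i, s_{i+1}) for each i < n. *)
Record ETP := mkETP {
  etp_n     : nat;
  etp_nclk  : nat;
  etp_inv   : nat -> constraint;
  etp_rate  : nat -> Q;
  etp_guard : nat -> constraint;
  etp_upd   : nat -> Q;
  etp_reset : nat -> list nat
}.

Definition constraint_wf (k : nat) (g : constraint) : Prop :=
  forall a, In a g -> (a_clock a < k)%nat.

Definition ETP_wf (P : ETP) : Prop :=
  (forall i, (i <= etp_n P)%nat -> constraint_wf (etp_nclk P) (etp_inv P i)) /\
  (forall i, (i < etp_n P)%nat ->
     constraint_wf (etp_nclk P) (etp_guard P i) /\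
     (forall x, In x (etp_reset P i) -> (x < etp_nclk P)%nat)).

Definition inE (lo hi : Q) (w : R) : Prop := Q2R lo <= w <= Q2R hi.

(** Given delays d_j, valuations v_{2j} and energies w_{2j} of the run
    starting from (s_0, v0, w0). *)
Fixpoint run_val (P : ETP) (v0 : valuation) (d : nat -> R) (j : nat) : valuation :=
  match j with
  | O => v0
  | S j' => reset (etp_reset P j') (delay (run_val P v0 d j') (d j'))
  end.

Fixpoint run_en (P : ETP) (w0 : R) (d : nat -> R) (j : nat) : R :=
  match j with
  | O => w0
  | S j' => run_en P w0 d j' + d j' * Q2R (etp_rate P j') + Q2R (etp_upd P j')
  end.

Definition run_ok (P : ETP) (lo hi : Q) (v0 : valuation) (w0 : R) (d : nat -> R) : Prop :=
  (forall j, (j < etp_n P)%nat ->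
     0 <= d j /\
     sat (run_val P v0 d j) (etp_inv P j) /\
     sat (delay (run_val P v0 d j) (d j)) (etp_inv P j ++ etp_guard P j) /\
     inE lo hi (run_en P w0 d j) /\
     inE lo hi (run_en P w0 d j + d j * Q2R (etp_rate P j))) /\
  inE lo hi (run_en P w0 d (etp_n P)).

Definition energy_rel (P : ETP) (lo hi : Q) (w0 w1 : R) : Prop :=
  inE lo hi w0 /\ inE lo hi w1 /\
  exists d : nat -> R,
    run_ok P lo hi zero_val w0 d /\
    (forall x, (x < etp_nclk P)%nat -> run_val P zero_val d (etp_n P) x = 0) /\
    run_en P w0 d (etp_n P) = w1.

Definition rset := R -> Prop.

Definition closed_subinterval (lo hi : Q) (I : rset) : Prop :=
  (forall x, ~ I x) \/
  exists l u, l <= u /\ inE lo hi l /\ inE lo hi u /\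
              (forall x, I x <-> l <= x <= u).

Definition efun (P : ETP) (lo hi : Q) (I : rset) : rset :=
  fun w1 => inE lo hi w1 /\ exists w0, I w0 /\ energy_rel P lo hi w0 w1.

Definition efun_inv (P : ETP) (lo hi : Q) (I : rset) : rset :=
  fun w0 => inE lo hi w0 /\ exists w1, I w1 /\ energy_rel P lo hi w0 w1.

Definition bigcap (I : nat -> rset) : rset := fun x => forall j, I j x.

Definition set_eq (A B : rset) : Prop := forall x, A x <-> B x.

(* Main.v *)
Require Import Defs.
From Stdlib Require Import Reals QArith Qreals List Lra Lia.
Open Scope R_scope.

Fixpoint fsum (n : nat) (f : nat -> R) : R :=
  match n with O => 0 | S n' => fsum n' f + f n' end.

Lemma fsum_ext n f g : (forall i, (i < n)%nat -> f i = g i) -> fsum n f = fsum n g.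
Proof. induction n; simpl; intros H; auto. rewrite IHn by (intros; apply H; lia). rewrite H by lia. ring. Qed.

Lemma fsum_add n f g : fsum n (fun i => f i + g i) = fsum n f + fsum n g.
Proof. induction n; simpl; [ring|rewrite IHn; ring]. Qed.

Lemma fsum_scal n r f : fsum n (fun i => r * f i) = r * fsum n f.
Proof. induction n; simpl; [ring|rewrite IHn; ring]. Qed.

Lemma fsum_zero n : fsum n (fun _ => 0) = 0.
Proof. induction n; simpl; [ring|rewrite IHn; ring]. Qed.

Lemma fsum_single n k c : (k < n)%nat -> fsum n (fun i => if Nat.eqb i k then c else 0) = c.
Proof. induction n; intros H; simpl. lia.
 destruct (Nat.eqb_spec n k).
 - subst. rewrite (fsum_ext _ _ (fun _ => 0)). rewrite fsum_zero; ring.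
   intros i Hi. destruct (Nat.eqb_spec i k); [lia|auto].
 - rewrite IHn by lia. ring. Qed.

Definition cstr := ((nat -> R) * R)%type.
Definition val (N : nat) (a : nat -> R) (x : nat -> R) := fsum N (fun i => a i * x i).
Definition satc N (c : cstr) x := val N (fst c) x <= snd c.
Definition sats N (cs : list cstr) x := forall c, In c cs -> satc N c x.

Definition upd (x : nat -> R) k t := fun i => if Nat.eqb i k then t else x i.

Lemma val_upd N a x k t : (k < N)%nat -> val N a (upd x k t) = val N a x + a k * (t - x k).
Proof. intros H. unfold val, upd.
 rewrite (fsum_ext _ _ (fun i => a i * x i + (if Nat.eqb i k then a k * (t - x k) else 0))).
 rewrite fsum_add, fsum_single; auto.
 intros i _. destruct (Nat.eqb_spec i k); subst; ring. Qed.

Lemma val_lin N a b r s x : val N (fun i => r * a i + s * b i) x = r * val N a x + s * val N b x.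
Proof. unfold val. rewrite <- !fsum_scal, <- fsum_add. apply fsum_ext; intros; ring. Qed.

Lemma val_ext N a x y : (forall i, (i < N)%nat -> x i = y i) -> val N a x = val N a y.
Proof. intros H; unfold val; apply fsum_ext; intros; rewrite H; auto. Qed.

Lemma sats_ext N cs x y : (forall i, (i < N)%nat -> x i = y i) -> sats N cs x -> sats N cs y.
Proof. unfold sats, satc; intros H Hs c Hc. rewrite <- (val_ext N _ x y H). auto. Qed.

Section FM.
Variable k : nat.
Definition posb (c : cstr) : bool := if Rlt_dec 0 (fst c k) then true else false.
Definition negb' (c : cstr) : bool := if Rlt_dec (fst c k) 0 then true else false.
Definition zerob (c : cstr) : bool := if Req_dec_T (fst c k) 0 then true else false.
Definition comb (p n : cstr) : cstr :=
  (fun i => (- fst n k) * fst p i + fst p k * fst n i, (- fst n k) * snd p + fst p k * snd n).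
Definition fm (cs : list cstr) : list cstr :=
  filter zerob cs ++ flat_map (fun p => map (comb p) (filter negb' cs)) (filter posb cs).
End FM.

Lemma sep (L U : list R) : (forall l u, In l L -> In u U -> l <= u) ->
  exists t, (forall l, In l L -> l <= t) /\ (forall u, In u U -> t <= u).
Proof.
 induction L as [|l L IH]; intros H.
 - clear H. induction U as [|u U IHU].
   + exists 0; split; intros ? [].
   + destruct IHU as [t [_ Ht]]. exists (Rmin u t). split; [intros ? []|].
     intros v [<-|Hv]. apply Rmin_l. eapply Rle_trans; [apply Rmin_r|auto].
 - destruct IH as [t [H1 H2]]. { intros; apply H; simpl; auto. }
   exists (Rmax l t). split.
   + intros v [<-|Hv]. apply Rmax_l. eapply Rle_trans; [apply H1; auto|apply Rmax_r].
   + intros u Hu. apply Rmax_lub; auto. apply H; simpl; auto.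
Qed.

Lemma fm_correct N k cs x : (k < N)%nat ->
  (sats N (fm k cs) x <-> exists t, sats N cs (upd x k t)).
Proof.
 intros Hk. unfold sats, satc, fm. split.
 - intros H.
   set (rest := fun (c : cstr) => val N (fst c) x - fst c k * x k).
   set (L := map (fun c : cstr => (snd c - rest c) / fst c k) (filter (negb' k) cs)).
   set (U := map (fun c : cstr => (snd c - rest c) / fst c k) (filter (posb k) cs)).
   destruct (sep L U) as [t [HL HU]].
   + intros l u Hl Hu. unfold L, U in *. apply in_map_iff in Hl as [n [<- Hn]].
     apply in_map_iff in Hu as [p [<- Hp]].
     assert (Hc := H (comb k p n) ltac:(apply in_or_app; right; apply in_flat_map; exists p; split; auto; apply in_map; auto)).
     apply filter_In in Hn as [_ Hn]. apply filter_In in Hp as [_ Hp].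
     unfold negb', posb in *. destruct (Rlt_dec (fst n k) 0); try discriminate.
     destruct (Rlt_dec 0 (fst p k)); try discriminate.
     unfold comb in Hc; simpl in Hc. rewrite val_lin in Hc. unfold rest.
     set (an := fst n k) in *. set (ap := fst p k) in *.
     set (vp := val N (fst p) x) in *. set (vn := val N (fst n) x) in *.
     set (bp := snd p) in *. set (bn := snd n) in *.
     apply (Rmult_le_reg_r (ap * - an)). nra.
     replace ((bn - (vn - an * x k)) / an * (ap * - an)) with (- ap * (bn - (vn - an * x k))) by (field; lra).
     replace ((bp - (vp - ap * x k)) / ap * (ap * - an)) with (- an * (bp - (vp - ap * x k))) by (field; lra).
     nra.
   + exists t. intros c Hc. rewrite val_upd by auto.
     destruct (total_order_T (fst c k) 0) as [[Hn|Hz]|Hp].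
     * assert (HH : (snd c - rest c) / fst c k <= t). apply HL. apply (in_map (fun c : cstr => (snd c - rest c) / fst c k)).
         apply filter_In; split; auto. unfold negb'. destruct (Rlt_dec (fst c k) 0); auto.
       unfold rest in HH. apply Rmult_le_compat_neg_l with (r := fst c k) in HH; [|lra].
       replace (fst c k * ((snd c - (val N (fst c) x - fst c k * x k)) / fst c k)) with
         (snd c - (val N (fst c) x - fst c k * x k)) in HH by (field; lra). lra.
     * rewrite Hz. assert (HH := H c ltac:(apply in_or_app; left; apply filter_In; split; auto; unfold zerob; destruct (Req_dec_T (fst c k) 0); auto)). lra.
     * assert (HH : t <= (snd c - rest c) / fst c k). apply HU. apply (in_map (fun c : cstr => (snd c - rest c) / fst c k)).
         apply filter_In; split; auto. unfold posb. destruct (Rlt_dec 0 (fst c k)); auto; lra.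
       unfold rest in HH. apply Rmult_le_compat_l with (r := fst c k) in HH; [|lra].
       replace (fst c k * ((snd c - (val N (fst c) x - fst c k * x k)) / fst c k)) with
         (snd c - (val N (fst c) x - fst c k * x k)) in HH by (field; lra). lra.
 - intros [t Ht] c Hc. apply in_app_or in Hc as [Hc|Hc].
   + apply filter_In in Hc as [Hc Hz]. assert (HH := Ht c Hc). rewrite val_upd in HH by auto.
     unfold zerob in Hz. destruct (Req_dec_T (fst c k) 0) as [e|]; try discriminate.
     rewrite e in HH. lra.
   + apply in_flat_map in Hc as [p [Hp Hc]]. apply in_map_iff in Hc as [n [<- Hn]].
     apply filter_In in Hp as [Hp Hp']. apply filter_In in Hn as [Hn Hn'].
     unfold negb', posb in *. destruct (Rlt_dec (fst n k) 0); try discriminate.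
     destruct (Rlt_dec 0 (fst p k)); try discriminate.
     assert (H1 := Ht p Hp). assert (H2 := Ht n Hn). rewrite val_upd in H1, H2 by auto.
     unfold comb; simpl. rewrite val_lin. nra.
Qed.

Fixpoint elim (ks : list nat) (cs : list cstr) : list cstr :=
  match ks with nil => cs | k :: ks' => fm k (elim ks' cs) end.

Lemma elim_correct N ks cs x : (forall k, In k ks -> (k < N)%nat) ->
  (sats N (elim ks cs) x <-> exists x', (forall i, ~ In i ks -> x' i = x i) /\ sats N cs x').
Proof.
 revert x; induction ks as [|k ks IH]; intros x Hks; simpl.
 - split. intros H; exists x; split; auto. intros [x' [H1 H2]].
   eapply sats_ext; [|exact H2]. intros; auto.
 - rewrite fm_correct by (apply Hks; simpl; auto). split.
   + intros [t Ht]. apply IH in Ht; [|intros; apply Hks; simpl; auto]. destruct Ht as [x' [H1 H2]].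
     exists x'; split; auto. intros i Hi. rewrite H1 by tauto. unfold upd.
     destruct (Nat.eqb_spec i k); auto. exfalso; apply Hi; auto.
   + intros [x' [H1 H2]]. exists (x' k). apply IH; [intros; apply Hks; simpl; auto|]. exists x'; split; auto.
     intros i Hi. unfold upd. destruct (Nat.eqb_spec i k); subst; auto.
     apply H1. intros [|]; auto.
Qed.

Definition ey p y := fun i => if Nat.eqb i p then y else 0.

Lemma projection N p cs : (p < N)%nat -> exists cs' : list (R * R),
  forall y, (exists x, x p = y /\ sats N cs x) <-> (forall c, In c cs' -> fst c * y <= snd c).
Proof.
 intros Hp. set (ks := filter (fun i => negb (Nat.eqb i p)) (seq 0 N)).
 assert (Hks : forall k, In k ks -> (k < N)%nat).
 { intros k Hk. apply filter_In in Hk as [Hk _]. apply in_seq in Hk. lia. }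
 exists (map (fun c : cstr => (fst c p, snd c)) (elim ks cs)). intros y.
 assert (Hv : forall a, val N a (ey p y) = a p * y).
 { intros a. unfold val, ey. rewrite <- (fsum_single N p (a p * y)) by auto.
   apply fsum_ext; intros i _. destruct (Nat.eqb_spec i p); subst; ring. }
 transitivity (sats N (elim ks cs) (ey p y)).
 - rewrite elim_correct by auto. split.
   + intros [x [Hx Hs]]. exists (fun i => if Nat.ltb i N then x i else ey p y i). split.
     * intros i Hi. destruct (Nat.ltb_spec i N); auto.
       unfold ey. destruct (Nat.eqb_spec i p). subst; auto.
       exfalso; apply Hi. apply filter_In; split. apply in_seq; lia.
       destruct (Nat.eqb_spec i p); auto.
     * eapply sats_ext; [|exact Hs]. intros i Hi. destruct (Nat.ltb_spec i N); auto; lia.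
   + intros [x [Hx Hs]]. exists x; split; auto. rewrite Hx. unfold ey; rewrite Nat.eqb_refl; auto.
     intros Hi. apply filter_In in Hi as [_ Hi]. rewrite Nat.eqb_refl in Hi; discriminate.
 - unfold sats, satc. split.
   + intros H c Hc. apply in_map_iff in Hc as [c' [<- Hc']]. simpl. rewrite <- Hv. auto.
   + intros H c Hc. rewrite Hv. apply (H (fst c p, snd c)). apply (in_map (fun c0 : cstr => (fst c0 p, snd c0))); auto.
Qed.

Definition Pc (cs : list (R * R)) y := forall c, In c cs -> fst c * y <= snd c.

Lemma nested_le (I : nat -> rset) : (forall j x, I (S j) x -> I j x) ->
  forall j k x, (j <= k)%nat -> I k x -> I j x.
Proof. intros H j k x Hjk. induction Hjk; auto. Qed.

Lemma nested lo hi (I : nat -> rset) (cs : list (R * R)) :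
  (forall j, closed_subinterval lo hi (I j)) -> (forall j x, I (S j) x -> I j x) ->
  (forall j, exists y, I j y /\ Pc cs y) -> exists y, (forall j, I j y) /\ Pc cs y.
Proof.
 intros Hcl Hn Hex.
 assert (Hiv : forall j, exists l u, forall x, I j x <-> l <= x <= u).
 { intros j. destruct (Hcl j) as [He|[l [u [_ [_ [_ H]]]]]].
   - destruct (Hex j) as [y [Hy _]]. exfalso; eapply He; eauto.
   - exists l, u; auto. }
 set (G := fun x => exists j, forall z, I j z -> Pc cs z -> x <= z).
 assert (Hub : forall i l u, (forall x, I i x <-> l <= x <= u) -> is_upper_bound G u).
 { intros i l u Hi x [j Hj]. destruct (Hex (max i j)) as [z [Hz Pz]].
   apply Rle_trans with z. apply Hj; auto. apply (nested_le I Hn j (max i j)); auto; lia.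
   apply Hi. apply (nested_le I Hn i (max i j)); auto; lia. }
 destruct (Hiv 0%nat) as [l0 [u0 H0]].
 destruct (completeness G) as [y [Hy1 Hy2]].
 { exists u0. eapply Hub; eauto. }
 { exists l0. exists 0%nat. intros z Hz _. apply H0 in Hz. lra. }
 exists y. split.
 - intros j. destruct (Hiv j) as [l [u Hj]]. apply Hj. split.
   + apply Hy1. exists j. intros z Hz _. apply Hj in Hz; lra.
   + apply Hy2. eapply Hub; eauto.
 - intros [a b] Hc. simpl. destruct (Hex 0%nat) as [z0 [_ Pz0]].
   destruct (total_order_T a 0) as [[Ha|Ha]|Ha].
   + assert (b / a <= y). apply Hy1. exists 0%nat. intros z _ Pz.
     assert (HH := Pz _ Hc). simpl in HH.
     apply (Rmult_le_reg_r (- a)). lra. replace (b / a * - a) with (- b) by (field; lra). nra.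
     apply Rmult_le_compat_neg_l with (r := a) in H; [|lra].
     replace (a * (b / a)) with b in H by (field; lra). lra.
   + subst. assert (HH := Pz0 _ Hc). simpl in HH. lra.
   + assert (y <= b / a). apply Hy2. intros x [j Hj].
     destruct (Hex j) as [z [Hz Pz]]. assert (HH := Pz _ Hc). simpl in HH.
     apply Rle_trans with z. apply Hj; auto.
     apply (Rmult_le_reg_r a). lra. replace (b / a * a) with b by (field; lra). nra.
     apply Rmult_le_compat_l with (r := a) in H; [|lra].
     replace (a * (b / a)) with b in H by (field; lra). lra.
Qed.

Definition le_ := ((nat -> R) * R)%type.
Definition evalL N (e : le_) x := val N (fst e) x + snd e.
Definition lvar k : le_ := (fun i => if Nat.eqb i k then 1 else 0, 0).
Definition lconst c : le_ := (fun _ => 0, c).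
Definition ladd (e f : le_) : le_ := (fun i => 1 * fst e i + 1 * fst f i, snd e + snd f).
Definition lscale r (e : le_) : le_ := (fun i => r * fst e i + 0 * fst e i, r * snd e).
Definition leq (e1 e2 : le_) : cstr :=
  let e := ladd e1 (lscale (-1) e2) in (fst e, - snd e).

Lemma ev_var N k x : (k < N)%nat -> evalL N (lvar k) x = x k.
Proof. intros H. unfold evalL, val, lvar; simpl.
 rewrite <- (fsum_single N k (x k)) by auto. rewrite Rplus_0_r.
 apply fsum_ext; intros i _. destruct (Nat.eqb_spec i k); subst; ring. Qed.
Lemma ev_const N c x : evalL N (lconst c) x = c.
Proof. unfold evalL, val, lconst; simpl. rewrite (fsum_ext _ _ (fun _ => 0)), fsum_zero. ring.
 intros; ring. Qed.
Lemma ev_add N e f x : evalL N (ladd e f) x = evalL N e x + evalL N f x.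
Proof. unfold evalL, ladd; simpl. rewrite val_lin. ring. Qed.
Lemma ev_scale N r e x : evalL N (lscale r e) x = r * evalL N e x.
Proof. unfold evalL, lscale; simpl. rewrite val_lin. ring. Qed.
Lemma sat_leq N e1 e2 x : satc N (leq e1 e2) x <-> evalL N e1 x <= evalL N e2 x.
Proof. assert (H := ev_add N e1 (lscale (-1) e2) x). rewrite ev_scale in H.
 unfold satc, leq, evalL in *; simpl in *. split; intros; lra. Qed.

Lemma sats_app N l1 l2 x : sats N (l1 ++ l2) x <-> sats N l1 x /\ sats N l2 x.
Proof. unfold sats; split. intros H; split; intros; apply H; apply in_or_app; auto.
 intros [H1 H2] c Hc. apply in_app_or in Hc as [|]; auto. Qed.
Lemma sats_fm {A} N (f : A -> list cstr) l x : sats N (flat_map f l) x <-> forall a, In a l -> sats N (f a) x.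
Proof. unfold sats; split. intros H a Ha c Hc; apply H; apply in_flat_map; eauto.
 intros H c Hc. apply in_flat_map in Hc as [a [Ha Hc]]. eauto. Qed.
Lemma sats_cons N c l x : sats N (c :: l) x <-> satc N c x /\ sats N l x.
Proof. unfold sats; split. intros H; split; [apply H; simpl; auto|intros; apply H; simpl; auto].
 intros [H1 H2] c' [<-|]; auto. Qed.
Lemma sats_nil N x : sats N nil x <-> True.
Proof. unfold sats; split; auto. intros _ c []. Qed.

Definition atom_cs (V : nat -> le_) (a : atom) : list cstr :=
  let q := lconst (Q2R (a_const a)) in
  match a_cmp a with
  | CLe => leq (V (a_clock a)) q :: nil
  | CGe => leq q (V (a_clock a)) :: nil
  | CEq => leq (V (a_clock a)) q :: leq q (V (a_clock a)) :: nil
  end.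
Definition cons_cs V (g : constraint) := flat_map (atom_cs V) g.

Lemma cons_cs_ok N V g x v : (forall c, evalL N (V c) x = v c) ->
  (sats N (cons_cs V g) x <-> sat v g).
Proof. intros HV. unfold cons_cs, sat. rewrite sats_fm. split; intros H a Ha; specialize (H a Ha);
 unfold atom_cs, sat_atom in *; destruct (a_cmp a);
 rewrite ?sats_cons, ?sats_nil, ?sat_leq, ?ev_const, ?HV in *; intuition lra. Qed.

Section Enc.
Variable P : ETP.
Variables lo hi : Q.
Let n := etp_n P.
Let N := (etp_n P + 2)%nat.

Fixpoint cv (j c : nat) : le_ :=
  match j with O => lconst 0
  | S j' => if existsb (Nat.eqb c) (etp_reset P j') then lconst 0 else ladd (cv j' c) (lvar (2 + j')) end.
Fixpoint en (j : nat) : le_ :=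
  match j with O => lvar 0
  | S j' => ladd (ladd (en j') (lscale (Q2R (etp_rate P j')) (lvar (2 + j')))) (lconst (Q2R (etp_upd P j'))) end.

Definition dd (x : nat -> R) := fun k => x (S (S k)).

Lemma cv_ok j c x : (j <= n)%nat -> evalL N (cv j c) x = run_val P zero_val (dd x) j c.
Proof. induction j; intros H; simpl. rewrite ev_const; auto.
 unfold reset, delay. destruct (existsb (Nat.eqb c) (etp_reset P j)). apply ev_const.
 rewrite ev_add, IHj, ev_var by (unfold N, n in *; lia). auto. Qed.

Lemma en_ok j x : (j <= n)%nat -> evalL N (en j) x = run_en P (x 0%nat) (dd x) j.
Proof. induction j; intros H; simpl. apply ev_var; unfold N; lia.
 rewrite !ev_add, ev_scale, ev_const, IHj, ev_var by (unfold N, n in *; lia). unfold dd; simpl; ring. Qed.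

Definition inE_cs e := leq (lconst (Q2R lo)) e :: leq e (lconst (Q2R hi)) :: nil.
Lemma inE_cs_ok e x : sats N (inE_cs e) x <-> inE lo hi (evalL N e x).
Proof. unfold inE_cs, inE. rewrite !sats_cons, sats_nil, !sat_leq, !ev_const. tauto. Qed.

Definition step_cs j :=
  leq (lconst 0) (lvar (2 + j)) :: nil ++
  cons_cs (fun c => cv j c) (etp_inv P j) ++
  cons_cs (fun c => ladd (cv j c) (lvar (2 + j))) (etp_inv P j ++ etp_guard P j) ++
  inE_cs (en j) ++
  inE_cs (ladd (en j) (lscale (Q2R (etp_rate P j)) (lvar (2 + j)))).

Definition all_cs :=
  flat_map step_cs (seq 0 n) ++ inE_cs (en n) ++
  flat_map (fun c => leq (cv n c) (lconst 0) :: leq (lconst 0) (cv n c) :: nil) (seq 0 (etp_nclk P)) ++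
  inE_cs (lvar 0) ++ inE_cs (lvar 1) ++ leq (en n) (lvar 1) :: leq (lvar 1) (en n) :: nil.

Lemma step_ok j x : (j < n)%nat -> (sats N (step_cs j) x <->
  (0 <= dd x j /\
     sat (run_val P zero_val (dd x) j) (etp_inv P j) /\
     sat (delay (run_val P zero_val (dd x) j) (dd x j)) (etp_inv P j ++ etp_guard P j) /\
     inE lo hi (run_en P (x 0%nat) (dd x) j) /\
     inE lo hi (run_en P (x 0%nat) (dd x) j + dd x j * Q2R (etp_rate P j)))).
Proof. intros Hj. unfold step_cs.
 rewrite sats_cons, sat_leq, ev_const, ev_var by (unfold N, n in *; lia). rewrite app_nil_l.
 rewrite !sats_app, !inE_cs_ok, ev_add, ev_scale, ev_var, en_ok by (unfold N, n in *; lia).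
 rewrite (cons_cs_ok N _ _ x (run_val P zero_val (dd x) j)).
 rewrite (cons_cs_ok N _ _ x (delay (run_val P zero_val (dd x) j) (dd x j))).
 replace (Q2R (etp_rate P j) * x (2 + j)%nat) with (dd x j * Q2R (etp_rate P j)) by (unfold dd; simpl; ring).
 unfold dd; simpl; tauto.
 intros c. unfold delay. rewrite ev_add, cv_ok, ev_var by (unfold N, n in *; lia). auto.
 intros c. apply cv_ok; lia.
Qed.

Lemma encode w0 w1 : energy_rel P lo hi w0 w1 <->
  exists x, x 0%nat = w0 /\ x 1%nat = w1 /\ sats N all_cs x.
Proof.
 assert (Hmain : forall x, sats N all_cs x <->
   inE lo hi (x 0%nat) /\ inE lo hi (x 1%nat) /\ run_ok P lo hi zero_val (x 0%nat) (dd x) /\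
   (forall c, (c < etp_nclk P)%nat -> run_val P zero_val (dd x) (etp_n P) c = 0) /\
   run_en P (x 0%nat) (dd x) (etp_n P) = x 1%nat).
 { intros x. unfold all_cs, run_ok.
   rewrite !sats_app, sats_fm, !inE_cs_ok, !ev_var, en_ok, sats_fm by (unfold N, n; lia).
   rewrite !sats_cons, sats_nil, !sat_leq, en_ok, ev_var by (unfold N, n; lia).
   split.
   - intros [H1 [H2 [H3 [H4 [H5 [H6 [H7 _]]]]]]]. unfold n in *.
     refine (conj H4 (conj H5 (conj (conj _ H2) (conj _ _)))).
     + intros j Hj. apply step_ok; [auto|apply H1; apply in_seq; lia].
     + intros c Hc. assert (HH := H3 c ltac:(apply in_seq; lia)).
       rewrite !sats_cons, sats_nil, !sat_leq, ev_const, cv_ok in HH by (unfold n; lia). lra.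
     + lra.
   - intros [H1 [H2 [[H3 H4] [H5 H6]]]]. unfold n in *.
     refine (conj _ (conj H4 (conj _ (conj H1 (conj H2 (conj _ (conj _ I))))))).
     + intros j Hj. apply in_seq in Hj. apply step_ok. lia. apply H3. lia.
     + intros c Hc. apply in_seq in Hc.
       rewrite !sats_cons, sats_nil, !sat_leq, ev_const, cv_ok by (unfold n; lia).
       rewrite H5 by lia. repeat split; lra.
     + lra.
     + lra. }
 split.
 - intros [H0 [H1 [d [Hr [Hz He]]]]].
   exists (fun i => match i with O => w0 | 1%nat => w1 | S (S k) => d k end).
   split; [auto|split; [auto|]]. apply Hmain. simpl. unfold dd. simpl. auto.
 - intros [x [<- [<- Hs]]]. apply Hmain in Hs as [H0 [H1 [H2 [H3 H4]]]].
   split; auto; split; auto. exists (dd x); auto.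
Qed.

End Enc.

Lemma rel_fix (P : ETP) lo hi (p : nat) (w : R) : (p <= 1)%nat ->
  exists cs', forall y,
   (exists x, x (1 - p)%nat = w /\ x p = y /\ sats (etp_n P + 2) (all_cs P lo hi) x) <-> Pc cs' y.
Proof.
 intros Hp. set (N := (etp_n P + 2)%nat).
 destruct (projection N p (leq (lvar (1 - p)) (lconst w) :: leq (lconst w) (lvar (1 - p)) :: all_cs P lo hi))
   as [cs' H]. unfold N; lia.
 exists cs'. intros y. unfold Pc. rewrite <- H. split.
 - intros [x [H1 [H2 H3]]]. exists x; split; auto.
   rewrite !sats_cons, !sat_leq, ev_var, ev_const by (unfold N; lia). split; [lra|split; [lra|auto]].
 - intros [x [H1 H2]]. rewrite !sats_cons, !sat_leq, ev_var, ev_const in H2 by (unfold N; lia).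
   exists x. split; [lra|split; [auto|tauto]].
Qed.

Theorem mainTheorem1 (P : ETP) (lo hi : Q) (I : nat -> rset) :
  ETP_wf P ->
  (forall j, closed_subinterval lo hi (I j)) ->
  (forall j x, I (S j) x -> I j x) ->
  set_eq (efun_inv P lo hi (bigcap I)) (bigcap (fun j => efun_inv P lo hi (I j))) /\
  set_eq (efun P lo hi (bigcap I)) (bigcap (fun j => efun P lo hi (I j))).
Proof.
 intros _ Hcl Hn. split.
 - intros w0. split.
   + intros [Hw [w1 [Hi Hr]]] j. split; auto. exists w1; split; auto.
   + intros H. destruct (rel_fix P lo hi 1 w0 ltac:(lia)) as [cs Hcs].
     destruct (nested lo hi I cs Hcl Hn) as [y [Hy Py]].
     { intros j. destruct (H j) as [_ [w1 [Hi Hr]]]. exists w1. split; auto.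
       apply Hcs. apply encode in Hr. exact Hr. }
     split. apply (H 0%nat). exists y. split; auto. apply encode. apply Hcs; auto.
 - intros w1. split.
   + intros [Hw [w0 [Hi Hr]]] j. split; auto. exists w0; split; auto.
   + intros H. destruct (rel_fix P lo hi 0 w1 ltac:(lia)) as [cs Hcs].
     destruct (nested lo hi I cs Hcl Hn) as [y [Hy Py]].
     { intros j. destruct (H j) as [_ [w0 [Hi Hr]]]. exists w0. split; auto.
       apply Hcs. apply encode in Hr. destruct Hr as [x [A [B C]]]. exists x; auto. }
     split. apply (H 0%nat). exists y. split; auto. apply encode. apply Hcs in Py.
     destruct Py as [x [A [B C]]]. exists x; auto.
Qed.
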